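(* Let $P(t,q)=\log\big(\sum_{n=1}^\infty 2^{-nt}e^{2^nq}\big)$ and $D_1=\{(t,q):t\ge0,\ q<0\}$. For $(t,q)\in D_1$, $$\frac{\partial P}{\partial q}(t,q)=\frac{\sum_{n\ge1}2^{-n(t-1)}e^{2^nq}}{\sum_{n\ge1}2^{-nt}e^{2^nq}}.$$ Consequently: (1) for fixed $0<t\le1$, $\lim_{q\to0^-}\frac{\partial P}{\partial q}(t,q)=\infty$; (2) $\lim_{(t,q)\to(0,0)}\frac{\partial P}{\partial q}(t,q)=\infty$ (with $(t,q)\in D_1$); (3) for $t\ge0$ and $q<0$, $\frac{\partial P}{\partial q}(t,q)>2$, and for fixed $t\ge0$, $\lim_{q\to-\infty}\frac{\partial P}{\partial q}(t,q)=2$. *)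

(* Defs.v *)
From Stdlib Require Import Reals.
From Coquelicot Require Export Coquelicot.
Open Scope R_scope.

(* n-th term (n >= 1) of the series defining P: 2^{-n t} e^{2^n q}.
   We index by k : nat with n = k+1 so that Coquelicot's Series (from 0)
   sums over n >= 1. *)
Definition Pterm (t q : R) (k : nat) : R :=
  Rpower 2 (- (INR (S k) * t)) * exp (2 ^ (S k) * q).

Definition P (t q : R) : R := ln (Series (Pterm t q)).

Definition Pnum_term (t q : R) (k : nat) : R :=
  Rpower 2 (- (INR (S k) * (t - 1))) * exp (2 ^ (S k) * q).

Definition dPdq (t q : R) : R := Derive (fun x => P t x) q.

(* Main.v *)
Require Import Defs.
From Stdlib Require Import Reals Lra Lia.
From Coquelicot Require Import Coquelicot.
Open Scope R_scope.

Lemma exp_INR_mult (n : nat) (x : R) : exp (INR n * x) = exp x ^ n.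
Proof.
  induction n as [|n IH].
  - simpl. rewrite Rmult_0_l, exp_0; reflexivity.
  - rewrite S_INR, Rmult_plus_distr_r, Rmult_1_l, exp_plus, IH.
    simpl pow. ring.
Qed.

Lemma poly_exp_bound (c y : R) (k : nat) : 0 < c -> 0 < y ->
  y ^ (S k) * exp (- (c * y)) <= (INR (S k) / c) ^ (S k).
Proof.
  intros Hc Hy.
  set (n := INR (S k)).
  assert (Hn : 0 < n) by (apply lt_0_INR; lia).
  assert (He : (c * y / n) ^ (S k) <= exp (c * y)).
  { replace (c * y) with (INR (S k) * (c * y / n)) at 2 by (fold n; field; lra).
    rewrite exp_INR_mult. apply pow_incr. split.
    - apply Rlt_le, Rdiv_lt_0_compat; [nra|lra].
    - pose proof (exp_ineq1_le (c * y / n)).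
      assert (0 <= c*y/n) by (apply Rlt_le, Rdiv_lt_0_compat; [nra|lra]). lra. }
  assert (Hexp : exp (- (c * y)) * exp (c * y) = 1).
  { rewrite <- exp_plus. replace (- (c * y) + c * y) with 0 by ring. apply exp_0. }
  assert (Heq : (n / c) ^ S k = y ^ S k * (/ (c * y / n)) ^ S k).
  { rewrite <- Rpow_mult_distr. f_equal. field. repeat split; lra. }
  rewrite Heq.
  apply Rmult_le_compat_l. { apply pow_le; lra. }
  rewrite pow_inv.
  assert (Hp : 0 < (c * y / n) ^ S k) by (apply pow_lt, Rdiv_lt_0_compat; [nra|lra]).
  apply (Rmult_le_reg_r ((c * y / n) ^ S k)); auto.
  rewrite Rinv_l by lra.
  pose proof (exp_pos (- (c*y))).
  apply Rle_trans with (exp (- (c * y)) * exp (c * y)).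
  - apply Rmult_le_compat_l; lra.
  - lra.
Qed.

Lemma ex_series_half_geom (C : R) : ex_series (fun k => C * (/2) ^ (S k)).
Proof.
  apply ex_series_ext with (fun k => scal (C * /2) ((/2) ^ k)).
  { intros k. unfold scal; simpl. unfold mult; simpl. ring. }
  apply (@ex_series_scal_l R_AbsRing R_NormedModule (C * /2) (fun k => (/2)^k)). eexists. apply is_series_geom.
  rewrite Rabs_pos_eq; lra.
Qed.

Lemma ex_series_gen (q : R) (m : nat) (a : nat -> R) : q < 0 ->
  (forall k, 0 <= a k <= 1) ->
  ex_series (fun k => a k * (2 ^ (S k)) ^ m * exp (2 ^ (S k) * q)).
Proof.
  intros Hq Ha.
  apply (@ex_series_le R_AbsRing R_CompleteNormedModule) with (fun k => (INR (S m) / (- q)) ^ (S m) * (/2) ^ (S k)).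
  2: apply ex_series_half_geom.
  intros k. change (Rabs (a k * (2 ^ S k) ^ m * exp (2 ^ S k * q)) <= (INR (S m) / - q) ^ S m * (/ 2) ^ S k).
  assert (Hx : 0 < 2 ^ S k) by (apply pow_lt; lra).
  pose proof (poly_exp_bound (- q) (2 ^ S k) m ltac:(lra) Hx) as B.
  replace (- (- q * 2 ^ S k)) with (2 ^ S k * q) in B by ring.
  destruct (Ha k) as [Ha0 Ha1].
  pose proof (exp_pos (2 ^ S k * q)).
  assert (Hxm : 0 <= (2 ^ S k) ^ m) by (apply pow_le; lra).
  rewrite Rabs_pos_eq by (apply Rmult_le_pos; [apply Rmult_le_pos|]; lra).
  rewrite <- Rinv_pow by lra.
  apply Rle_trans with ((2 ^ S k) ^ m * exp (2 ^ S k * q)).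
  { rewrite Rmult_assoc. rewrite <- (Rmult_1_l ((2 ^ S k) ^ m * exp (2 ^ S k * q))) at 2.
    apply Rmult_le_compat_r; [apply Rmult_le_pos|]; lra. }
  apply (Rmult_le_reg_r (2 ^ S k)); auto.
  replace ((INR (S m) / - q) ^ S m * / 2 ^ S k * 2 ^ S k) with ((INR (S m) / - q) ^ S m) by (field; lra).
  replace ((2 ^ S k) ^ m * exp (2 ^ S k * q) * 2 ^ S k) with
    ((2 ^ S k) ^ S m * exp (2 ^ S k * q)) by (simpl; ring).
  exact B.
Qed.

Lemma exp_taylor2 (d : R) : 0 <= exp d - 1 - d <= d ^ 2 * exp (Rabs d).
Proof.
  pose proof (exp_ineq1_le d) as H1.
  pose proof (exp_ineq1_le (- d)) as H2.
  pose proof (exp_pos d) as Hp.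
  assert (Hm : exp (- d) * exp d = 1).
  { rewrite <- exp_plus. replace (- d + d) with 0 by ring. apply exp_0. }
  assert (H3 : exp d - 1 <= d * exp d).
  { assert ((1 - d) * exp d <= exp (- d) * exp d) by (apply Rmult_le_compat_r; lra). nra. }
  split; [lra|].
  destruct (Rle_or_lt 0 d) as [Hd|Hd].
  - rewrite Rabs_pos_eq by lra. nra.
  - rewrite Rabs_left by lra.
    assert (1 <= exp (- d)).
    { pose proof (exp_ineq1_le (-d)). lra. }
    assert (d * (exp d - 1) <= d * d) by nra.
    nra.
Qed.

Definition acoef (t : R) (k : nat) : R := Rpower 2 (- (INR (S k) * t)).

Lemma acoef_pos t k : 0 < acoef t k.
Proof. unfold acoef, Rpower. apply exp_pos. Qed.

Lemma acoef_le1 t k : 0 <= t -> acoef t k <= 1.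
Proof.
  intros Ht. unfold acoef. rewrite <- (Rpower_O 2) by lra.
  apply Rle_Rpower; [lra|].
  assert (0 <= INR (S k)) by apply pos_INR. nra.
Qed.

Lemma acoef_bnd t : 0 <= t -> forall k, 0 <= acoef t k <= 1.
Proof. intros Ht k. split; [apply Rlt_le, acoef_pos | apply acoef_le1; auto]. Qed.

Lemma Pterm_eq t q k : Pterm t q k = acoef t k * (2 ^ S k) ^ 0 * exp (2 ^ S k * q).
Proof. unfold Pterm, acoef. simpl pow at 2. ring. Qed.

Lemma Pnum_eq t q k : Pnum_term t q k = acoef t k * (2 ^ S k) ^ 1 * exp (2 ^ S k * q).
Proof.
  unfold Pnum_term, acoef.
  replace (- (INR (S k) * (t - 1))) with (- (INR (S k) * t) + INR (S k)) by ring.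
  rewrite Rpower_plus, Rpower_pow by lra. ring.
Qed.

Lemma ex_Pterm t q : 0 <= t -> q < 0 -> ex_series (Pterm t q).
Proof.
  intros Ht Hq. apply (ex_series_ext (fun k => acoef t k * (2 ^ S k) ^ 0 * exp (2 ^ S k * q))).
  { intros k; rewrite Pterm_eq; reflexivity. }
  apply ex_series_gen; auto. apply acoef_bnd; auto.
Qed.

Lemma ex_Pnum t q : 0 <= t -> q < 0 -> ex_series (Pnum_term t q).
Proof.
  intros Ht Hq. apply (ex_series_ext (fun k => acoef t k * (2 ^ S k) ^ 1 * exp (2 ^ S k * q))).
  { intros k; rewrite Pnum_eq; reflexivity. }
  apply ex_series_gen; auto. apply acoef_bnd; auto.
Qed.

Lemma Series_nonneg (a : nat -> R) : (forall n, 0 <= a n) -> ex_series a -> 0 <= Series a.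
Proof.
  intros H E.
  pose proof (Series_le (fun n => 0 * a n) a) as L.
  rewrite Series_scal_l in L. rewrite Rmult_0_l in L. apply L; auto.
  intros n; rewrite Rmult_0_l; split; [lra | auto].
Qed.

Lemma Series_ge_first (a : nat -> R) : (forall n, 0 <= a n) -> ex_series a -> a 0%nat <= Series a.
Proof.
  intros H E. rewrite Series_incr_1 by auto.
  assert (0 <= Series (fun k => a (S k))).
  { apply Series_nonneg; auto. apply ex_series_incr_1 in E. auto. }
  lra.
Qed.

Lemma S_pos t q : 0 <= t -> q < 0 -> 0 < Series (Pterm t q).
Proof.
  intros Ht Hq.
  apply Rlt_le_trans with (Pterm t q 0%nat).
  - unfold Pterm. apply Rmult_lt_0_compat; [apply (acoef_pos t 0) | apply exp_pos].
  - apply Series_ge_first; [|apply ex_Pterm; auto].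
    intros n; apply Rlt_le, Rmult_lt_0_compat; [apply (acoef_pos t n) | apply exp_pos].
Qed.

Lemma is_series_lin (a b c : nat -> R) (la lb lc h : R) :
  is_series a la -> is_series b lb -> is_series c lc ->
  is_series (fun n => a n - b n - h * c n) (la - lb - h * lc).
Proof.
  intros Ha Hb Hc.
  pose proof (@is_series_minus R_AbsRing R_NormedModule a b la lb Ha Hb) as H1.
  pose proof (@is_series_scal_l R_AbsRing R_NormedModule h c lc Hc) as H2.
  pose proof (@is_series_minus R_AbsRing R_NormedModule _ _ _ _ H1 H2) as H3.
  apply (@is_series_ext R_AbsRing R_NormedModule) with (2 := H3).
  intros n. unfold plus, opp, scal; simpl. unfold mult; simpl. unfold plus, opp; simpl. ring.
Qed.

Lemma ex_series_scal (c : R) (a : nat -> R) : ex_series a -> ex_series (fun n => c * a n).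
Proof.
  intros [l Hl]. exists (c * l).
  apply (@is_series_ext R_AbsRing R_NormedModule) with (2 := @is_series_scal_l R_AbsRing R_NormedModule c a l Hl).
  intros n. reflexivity.
Qed.

Lemma term_bound t q h k : 0 <= t -> q < 0 -> Rabs h <= - q / 2 ->
  Rabs (Pterm t (q + h) k - Pterm t q k - h * Pnum_term t q k)
  <= h ^ 2 * (acoef t k * (2 ^ S k) ^ 2 * exp (2 ^ S k * (q / 2))).
Proof.
  intros Ht Hq Hh.
  rewrite !Pterm_eq, Pnum_eq.
  set (x := 2 ^ S k). set (a := acoef t k).
  assert (Hx : 0 < x) by (apply pow_lt; lra).
  assert (Ha : 0 < a) by apply acoef_pos.
  replace (a * x ^ 0 * exp (x * (q + h)) - a * x ^ 0 * exp (x * q) - h * (a * x ^ 1 * exp (x * q)))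
    with (a * exp (x * q) * (exp (x * h) - 1 - x * h))
    by (replace (x * (q + h)) with (x * q + x * h) by ring; rewrite exp_plus; simpl; ring).
  pose proof (exp_taylor2 (x * h)) as [T1 T2].
  pose proof (exp_pos (x * q)) as Eq.
  rewrite Rabs_pos_eq by (apply Rmult_le_pos; [apply Rmult_le_pos|]; lra).
  assert (Hle : exp (x * q) * exp (Rabs (x * h)) <= exp (x * (q / 2))).
  { rewrite <- exp_plus.
    rewrite Rabs_mult, (Rabs_pos_eq x) by lra.
    destruct (Req_dec (x * q + x * Rabs h) (x * (q/2))) as [E|E].
    - rewrite E; lra.
    - apply Rlt_le, exp_increasing.
      assert (x * Rabs h <= x * (- q / 2)) by (apply Rmult_le_compat_l; lra).
      lra. }
  apply Rle_trans with (a * (exp (x * q) * ((x * h) ^ 2 * exp (Rabs (x * h))))).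
  { rewrite Rmult_assoc. apply Rmult_le_compat_l; [lra|].
    apply Rmult_le_compat_l; lra. }
  replace (a * (exp (x * q) * ((x * h) ^ 2 * exp (Rabs (x * h)))))
    with ((h ^ 2 * (a * x ^ 2)) * (exp (x * q) * exp (Rabs (x * h)))) by ring.
  replace (h ^ 2 * (a * x ^ 2 * exp (x * (q / 2)))) with ((h ^ 2 * (a * x ^ 2)) * exp (x * (q / 2))) by ring.
  apply Rmult_le_compat_l; [|exact Hle].
  apply Rmult_le_pos; [apply pow2_ge_0 | apply Rmult_le_pos; [lra | apply pow2_ge_0]].
Qed.

Lemma deriv_S t q : 0 <= t -> q < 0 ->
  is_derive (fun x => Series (Pterm t x)) q (Series (Pnum_term t q)).
Proof.
  intros Ht Hq. apply is_derive_Reals. intros eps Heps.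
  set (g := fun k => acoef t k * (2 ^ S k) ^ 2 * exp (2 ^ S k * (q / 2))).
  assert (Eg : ex_series g) by (apply ex_series_gen; [lra | apply acoef_bnd; auto]).
  set (C := Series g).
  assert (HC : 0 <= C).
  { apply Series_nonneg; auto. intros k. unfold g.
    pose proof (acoef_pos t k). pose proof (exp_pos (2 ^ S k * (q / 2))).
    apply Rmult_le_pos; [apply Rmult_le_pos|]; [lra | apply pow2_ge_0 | lra]. }
  assert (Hd : 0 < Rmin (- q / 2) (eps / (C + 1))).
  { apply Rmin_pos; [lra | apply Rdiv_lt_0_compat; lra]. }
  exists (mkposreal _ Hd). simpl. intros h Hh0 Hh.
  assert (Hh1 : Rabs h <= - q / 2) by (pose proof (Rmin_l (- q / 2) (eps / (C + 1))); lra).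
  assert (Hh2 : Rabs h < eps / (C + 1)) by (pose proof (Rmin_r (- q / 2) (eps / (C + 1))); lra).
  set (r := fun k => Pterm t (q + h) k - Pterm t q k - h * Pnum_term t q k).
  assert (Hr : Series r = Series (Pterm t (q + h)) - Series (Pterm t q) - h * Series (Pnum_term t q)).
  { apply is_series_unique. apply is_series_lin; apply Series_correct.
    - apply ex_Pterm; auto. pose proof (Rle_abs h); lra.
    - apply ex_Pterm; auto.
    - apply ex_Pnum; auto. }
  assert (Hb : forall k, Rabs (r k) <= h ^ 2 * g k).
  { intros k. unfold r, g. apply term_bound; auto. }
  assert (Ehg : ex_series (fun k => h ^ 2 * g k)) by (apply ex_series_scal; auto).
  assert (Er : ex_series (fun k => Rabs (r k))).
  { apply (@ex_series_le R_AbsRing R_CompleteNormedModule) with (2 := Ehg).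
    intros k. change (Rabs (Rabs (r k)) <= h ^ 2 * g k). rewrite Rabs_Rabsolu. auto. }
  assert (HR : Rabs (Series r) <= h ^ 2 * C).
  { apply Rle_trans with (1 := Series_Rabs r Er).
    unfold C. rewrite <- Series_scal_l. apply Series_le; auto.
    intros k; split; [apply Rabs_pos | auto]. }
  replace ((Series (Pterm t (q + h)) - Series (Pterm t q)) / h - Series (Pnum_term t q))
    with (Series r / h) by (rewrite Hr; field; auto).
  unfold Rdiv. rewrite Rabs_mult, Rabs_inv.
  assert (Hah : 0 < Rabs h) by (apply Rabs_pos_lt; auto).
  apply Rle_lt_trans with (h ^ 2 * C * / Rabs h).
  { apply Rmult_le_compat_r; [apply Rlt_le, Rinv_0_lt_compat; auto | auto]. }
  replace (h ^ 2) with (Rabs h * Rabs h) by (rewrite <- Rabs_mult, Rabs_pos_eq; [ring | nra]).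
  replace (Rabs h * Rabs h * C * / Rabs h) with (Rabs h * C) by (field; lra).
  apply Rle_lt_trans with (eps / (C + 1) * C).
  { apply Rmult_le_compat_r; lra. }
  apply (Rmult_lt_reg_r (C + 1)); [lra|].
  replace (eps / (C + 1) * C * (C + 1)) with (eps * C) by (field; lra). nra.
Qed.

Lemma deriv_P t q : 0 <= t -> q < 0 ->
  is_derive (fun x => P t x) q (Series (Pnum_term t q) / Series (Pterm t q)).
Proof.
  intros Ht Hq.
  pose proof (is_derive_comp ln (fun x => Series (Pterm t x)) q _ _
     (is_derive_ln _ (S_pos t q Ht Hq)) (deriv_S t q Ht Hq)) as H.
  unfold P. unfold scal in H; simpl in H; unfold mult in H; simpl in H.
  exact H.
Qed.

Lemma dPdq_eq t q : 0 <= t -> q < 0 ->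
  dPdq t q = Series (Pnum_term t q) / Series (Pterm t q).
Proof. intros Ht Hq. unfold dPdq. apply is_derive_unique, deriv_P; auto. Qed.

Lemma Pnum_Pterm t q k : Pnum_term t q k = 2 ^ S k * Pterm t q k.
Proof. rewrite Pnum_eq, Pterm_eq. simpl pow. ring. Qed.

Lemma Pterm_pos t q k : 0 < Pterm t q k.
Proof. unfold Pterm. apply Rmult_lt_0_compat; [apply (acoef_pos t k) | apply exp_pos]. Qed.

Lemma sum_ge (a : nat -> R) (c : R) (n : nat) :
  (forall k, (k <= n)%nat -> c <= a k) -> INR (S n) * c <= sum_f_R0 a n.
Proof.
  induction n as [|n IH]; intros H.
  - simpl. specialize (H 0%nat (le_n 0)). lra.
  - simpl sum_f_R0. rewrite S_INR.
    assert (INR (S n) * c <= sum_f_R0 a n) by (apply IH; intros k Hk; apply H; lia).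
    specialize (H (S n) (le_n _)). lra.
Qed.

Lemma sum_le (a : nat -> R) (c : R) (n : nat) :
  (forall k, (k <= n)%nat -> a k <= c) -> sum_f_R0 a n <= INR (S n) * c.
Proof.
  induction n as [|n IH]; intros H.
  - simpl. specialize (H 0%nat (le_n 0)). lra.
  - simpl sum_f_R0. rewrite S_INR.
    assert (sum_f_R0 a n <= INR (S n) * c) by (apply IH; intros k Hk; apply H; lia).
    specialize (H (S n) (le_n _)). lra.
Qed.

Lemma Series_ge_partial (a : nat -> R) (c : R) (K : nat) :
  (forall n, 0 <= a n) -> ex_series a -> (forall k, (k < K)%nat -> c <= a k) ->
  INR K * c <= Series a.
Proof.
  intros H0 E H. destruct K as [|K].
  - simpl. rewrite Rmult_0_l. apply Series_nonneg; auto.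
  - rewrite (Series_incr_n a (S K)) by (auto; lia). simpl Init.Nat.pred.
    assert (INR (S K) * c <= sum_f_R0 a K) by (apply sum_ge; intros k Hk; apply H; lia).
    assert (0 <= Series (fun k => a (S K + k)%nat)).
    { apply Series_nonneg; auto. apply (ex_series_incr_n a (S K)). auto. }
    lra.
Qed.

Lemma ln2_lt_1 : ln 2 < 1.
Proof.
  rewrite <- (ln_exp 1). apply ln_increasing; [lra|].
  pose proof (exp_ineq1 1 ltac:(lra)). lra.
Qed.

Lemma pow2_ge_INR (n : nat) : INR n <= 2 ^ n.
Proof.
  induction n as [|n IH]; [simpl; lra|].
  rewrite S_INR. simpl pow.
  assert (1 <= 2 ^ n) by (apply pow_R1_Rle; lra). lra.
Qed.

Lemma diff_series t q : 0 <= t -> q < 0 ->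
  Series (Pnum_term t q) - 2 * Series (Pterm t q)
  = Series (fun k => (2 ^ S k - 2) * Pterm t q k).
Proof.
  intros Ht Hq.
  rewrite <- Series_scal_l, <- Series_minus.
  - apply Series_ext. intros k. rewrite Pnum_Pterm. ring.
  - apply ex_Pnum; auto.
  - apply ex_series_scal, ex_Pterm; auto.
Qed.

Lemma u_nonneg t q k : 0 <= (2 ^ S k - 2) * Pterm t q k.
Proof.
  apply Rmult_le_pos; [|apply Rlt_le, Pterm_pos].
  assert (1 <= 2 ^ k) by (apply pow_R1_Rle; lra). simpl pow. lra.
Qed.

Lemma ex_u t q : 0 <= t -> q < 0 -> ex_series (fun k => (2 ^ S k - 2) * Pterm t q k).
Proof.
  intros Ht Hq.
  apply (@ex_series_le R_AbsRing R_CompleteNormedModule) with (2 := ex_Pnum t q Ht Hq).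
  intros k. change (Rabs ((2 ^ S k - 2) * Pterm t q k) <= Pnum_term t q k).
  rewrite Rabs_pos_eq by apply u_nonneg. rewrite Pnum_Pterm.
  pose proof (Pterm_pos t q k). nra.
Qed.

Lemma ratio_gt2 t q : 0 <= t -> q < 0 -> 2 < Series (Pnum_term t q) / Series (Pterm t q).
Proof.
  intros Ht Hq.
  pose proof (S_pos t q Ht Hq) as HS.
  assert (Hd : 0 < Series (Pnum_term t q) - 2 * Series (Pterm t q)).
  { rewrite diff_series by auto.
    set (u := fun k => (2 ^ S k - 2) * Pterm t q k).
    assert (Eu : ex_series u) by (apply ex_u; auto).
    rewrite Series_incr_1 by auto.
    assert (u 0%nat = 0) by (unfold u; simpl; ring).
    assert (u 1%nat <= Series (fun k => u (S k))).
    { apply (Series_ge_first (fun k => u (S k))).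
      - intros n; apply u_nonneg.
      - apply ex_series_incr_1 in Eu. auto. }
    assert (0 < u 1%nat).
    { unfold u. apply Rmult_lt_0_compat; [simpl; lra | apply Pterm_pos]. }
    lra. }
  apply (Rmult_lt_reg_r (Series (Pterm t q))); auto.
  unfold Rdiv. rewrite Rmult_assoc, Rinv_l, Rmult_1_r by lra. lra.
Qed.

Lemma exp_le_mono x y : x <= y -> exp x <= exp y.
Proof. intros H. destruct (Req_dec x y) as [E|E]; [subst; lra | apply Rlt_le, exp_increasing; lra]. Qed.

Definition g2 (k : nat) : R := 1 * (2 ^ S k) ^ 1 * exp (2 ^ S k * (- 1 / 2)).

Lemma ex_g2 : ex_series g2.
Proof. unfold g2. apply (ex_series_gen (-1/2) 1 (fun _ => 1)); [lra | intros; lra]. Qed.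

Lemma u_bound t q k : 0 <= t -> q <= -1 ->
  (2 ^ S k - 2) * Pterm t q k <= (acoef t 0 * exp (2 ^ 1 * q) * exp (q + 1)) * g2 k.
Proof.
  intros Ht Hq.
  assert (Hc : 0 < acoef t 0 * exp (2 ^ 1 * q) * exp (q + 1)).
  { pose proof (acoef_pos t 0). pose proof (exp_pos (2 ^ 1 * q)). pose proof (exp_pos (q + 1)).
    apply Rmult_lt_0_compat; [apply Rmult_lt_0_compat|]; auto. }
  assert (Hg : 0 <= g2 k).
  { unfold g2. pose proof (exp_pos (2 ^ S k * (-1/2))). assert (0 < 2 ^ S k) by (apply pow_lt; lra).
    rewrite pow_1, Rmult_1_l. apply Rmult_le_pos; lra. }
  destruct k as [|k].
  - replace (2 ^ 1 - 2) with 0 by (simpl; ring). rewrite Rmult_0_l. apply Rmult_le_pos; lra.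
  - change (Pterm t q (S k)) with (acoef t (S k) * exp (2 ^ S (S k) * q)).
    set (x := 2 ^ S (S k)).
    assert (Hx : 4 <= x).
    { unfold x. simpl pow. assert (1 <= 2 ^ k) by (apply pow_R1_Rle; lra). lra. }
    assert (Ha : acoef t (S k) <= acoef t 0).
    { unfold acoef. apply Rle_Rpower; [lra|].
      apply Ropp_le_contravar, Rmult_le_compat_r; [auto | apply le_INR; lia]. }
    assert (He : exp (x * q) <= exp (2 ^ 1 * q) * exp (q + 1) * exp (x * (- 1 / 2))).
    { rewrite <- !exp_plus. apply exp_le_mono. simpl pow. nra. }
    unfold g2. fold x. rewrite pow_1. rewrite Rmult_1_l.
    pose proof (acoef_pos t (S k)). pose proof (exp_pos (x * q)).
    apply Rle_trans with (x * (acoef t 0 * (exp (2 ^ 1 * q) * exp (q + 1) * exp (x * (- 1 / 2))))).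
    + apply Rmult_le_compat; try lra.
      * apply Rmult_le_pos; lra.
      * apply Rmult_le_compat; lra.
    + right. rewrite ?pow_1. ring.
Qed.

Lemma ratio_upper t q : 0 <= t -> q <= -1 ->
  Series (Pnum_term t q) / Series (Pterm t q) - 2 <= exp (q + 1) * Series g2.
Proof.
  intros Ht Hq.
  assert (Hq' : q < 0) by lra.
  pose proof (S_pos t q Ht Hq') as HS.
  set (c := acoef t 0 * exp (2 ^ 1 * q)).
  assert (Hc : 0 < c) by (apply Rmult_lt_0_compat; [apply acoef_pos | apply exp_pos]).
  assert (HS0 : c <= Series (Pterm t q)).
  { apply (Series_ge_first (Pterm t q)); [intros; apply Rlt_le, Pterm_pos | apply ex_Pterm; auto]. }
  assert (HU : Series (Pnum_term t q) - 2 * Series (Pterm t q) <= c * exp (q + 1) * Series g2).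
  { rewrite diff_series by auto. rewrite <- Series_scal_l.
    apply Series_le.
    - intros k. split; [apply u_nonneg | apply u_bound; auto].
    - apply ex_series_scal, ex_g2. }
  assert (HG : 0 <= Series g2).
  { apply Series_nonneg; [|apply ex_g2]. intros k. unfold g2.
    pose proof (exp_pos (2 ^ S k * (-1/2))). assert (0 < 2 ^ S k) by (apply pow_lt; lra). nra. }
  pose proof (exp_pos (q + 1)).
  replace (Series (Pnum_term t q) / Series (Pterm t q) - 2) with
    ((Series (Pnum_term t q) - 2 * Series (Pterm t q)) / Series (Pterm t q)) by (field; lra).
  apply Rle_trans with (c * exp (q + 1) * Series g2 / Series (Pterm t q)).
  { unfold Rdiv. apply Rmult_le_compat_r; [apply Rlt_le, Rinv_0_lt_compat; lra | auto]. }
  apply (Rmult_le_reg_r (Series (Pterm t q))); auto.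
  replace (c * exp (q + 1) * Series g2 / Series (Pterm t q) * Series (Pterm t q))
    with (c * (exp (q + 1) * Series g2)) by (field; lra).
  rewrite (Rmult_comm (exp (q + 1) * Series g2)). apply Rmult_le_compat_r; [apply Rmult_le_pos; lra | auto].
Qed.

Lemma Pterm_le_acoef t q k : q < 0 -> Pterm t q k <= acoef t k.
Proof.
  intros Hq. change (Pterm t q k) with (acoef t k * exp (2 ^ S k * q)).
  pose proof (acoef_pos t k).
  assert (exp (2 ^ S k * q) <= 1).
  { rewrite <- exp_0. apply exp_le_mono. assert (0 < 2 ^ S k) by (apply pow_lt; lra). nra. }
  nra.
Qed.

Lemma ex_acoef t : 0 < t -> ex_series (acoef t).
Proof.
  intros Ht. set (r := Rpower 2 (- t)).
  assert (Hr0 : 0 < r) by (unfold r, Rpower; apply exp_pos).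
  assert (Hr1 : r < 1).
  { unfold r. rewrite <- (Rpower_O 2) by lra. apply Rpower_lt; lra. }
  apply (ex_series_ext (fun k => r * r ^ k)).
  { intros k. unfold acoef.
    rewrite tech_pow_Rmult. rewrite <- (Rpower_pow (S k) r) by auto.
    unfold r. rewrite Rpower_mult. f_equal. ring. }
  apply ex_series_scal. eexists. apply is_series_geom. rewrite Rabs_pos_eq; lra.
Qed.

Lemma lim1 t : 0 < t <= 1 -> forall M, exists delta, 0 < delta /\
  forall q, - delta < q < 0 -> M < Series (Pnum_term t q) / Series (Pterm t q).
Proof.
  intros [Ht0 Ht1] M.
  set (A := Series (acoef t)).
  assert (EA : ex_series (acoef t)) by (apply ex_acoef; auto).
  assert (HA : 0 < A).
  { apply Rlt_le_trans with (acoef t 0); [apply acoef_pos|].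
    apply Series_ge_first; auto. intros; apply Rlt_le, acoef_pos. }
  destruct (INR_archimed 1 (2 * M * A) ltac:(lra)) as [K HK]. rewrite Rmult_1_r in HK.
  assert (HK2 : 0 < 2 ^ K) by (apply pow_lt; lra).
  exists (/ (2 * 2 ^ K)). split; [apply Rinv_0_lt_compat; lra|].
  intros q [Hq1 Hq2].
  assert (Ht : 0 <= t) by lra.
  pose proof (S_pos t q Ht Hq2) as HS.
  assert (HSA : Series (Pterm t q) <= A).
  { apply Series_le; auto. intros n; split; [apply Rlt_le, Pterm_pos | apply Pterm_le_acoef; auto]. }
  assert (HN : INR K * / 2 <= Series (Pnum_term t q)).
  { apply Series_ge_partial; [| apply ex_Pnum; auto |].
    - intros n; rewrite Pnum_Pterm. pose proof (Pterm_pos t q n). assert (0 < 2 ^ S n) by (apply pow_lt; lra). nra.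
    - intros k Hk. unfold Pnum_term.
      assert (R1 : 1 <= Rpower 2 (- (INR (S k) * (t - 1)))).
      { rewrite <- (Rpower_O 2) at 1 by lra. apply Rle_Rpower; [lra|].
        pose proof (pos_INR (S k)). nra. }
      assert (Hx : 2 ^ S k <= 2 ^ K) by (apply Rle_pow; [lra | lia]).
      assert (Hxq : - / 2 <= 2 ^ S k * q).
      { assert (2 ^ K * (- q) <= 2 ^ K * / (2 * 2 ^ K)) by (apply Rmult_le_compat_l; lra).
        replace (2 ^ K * / (2 * 2 ^ K)) with (/ 2) in H by (field; lra).
        assert (0 < 2 ^ S k) by (apply pow_lt; lra). nra. }
      pose proof (exp_ineq1_le (2 ^ S k * q)).
      pose proof (exp_pos (2 ^ S k * q)). nra. }
  assert (HN0 : 0 <= Series (Pnum_term t q)) by (pose proof (pos_INR K); lra).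
  apply Rlt_le_trans with (Series (Pnum_term t q) / A).
  - apply (Rmult_lt_reg_r A); auto. unfold Rdiv. rewrite Rmult_assoc, Rinv_l, Rmult_1_r by lra. lra.
  - unfold Rdiv. apply Rmult_le_compat_l; auto. apply Rinv_le_contravar; auto.
Qed.

Lemma Pterm_le1 t q k : 0 <= t -> q < 0 -> Pterm t q k <= 1.
Proof. intros Ht Hq. apply Rle_trans with (acoef t k); [apply Pterm_le_acoef | apply acoef_le1]; auto. Qed.

Lemma lim2 M : exists delta : posreal, forall t q : R, 0 <= t -> q < 0 ->
  Rabs t < delta -> Rabs q < delta -> M < Series (Pnum_term t q) / Series (Pterm t q).
Proof.
  destruct (INR_archimed 1 M ltac:(lra)) as [K0 HK0]. rewrite Rmult_1_r in HK0.
  set (K := S K0). set (L := (4 * K)%nat).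
  assert (HL : 0 < 2 ^ L) by (apply pow_lt; lra).
  assert (Hd : 0 < / (4 * 2 ^ L)) by (apply Rinv_0_lt_compat; lra).
  exists (mkposreal _ Hd). intros t q Ht Hq Hta Hqa.
  change (Rabs t < / (4 * 2 ^ L)) in Hta. change (Rabs q < / (4 * 2 ^ L)) in Hqa.
  rewrite Rabs_pos_eq in Hta by lra. rewrite Rabs_left in Hqa by lra.
  pose proof (S_pos t q Ht Hq) as HS.
  set (S0 := Series (Pterm t q)). set (N0 := Series (Pnum_term t q)).
  assert (HS' : 0 < S0) by exact HS.
  assert (ES := ex_Pterm t q Ht Hq). assert (EN := ex_Pnum t q Ht Hq).
  assert (HSL : INR L * / 2 <= S0).
  { apply Series_ge_partial; auto. { intros; apply Rlt_le, Pterm_pos. }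
    intros k Hk. unfold Pterm, Rpower. rewrite <- exp_plus.
    set (e := - (INR (S k) * t) * ln 2 + 2 ^ S k * q).
    assert (Hx : 2 ^ S k <= 2 ^ L) by (apply Rle_pow; [lra | lia]).
    assert (Hk1 : INR (S k) <= 2 ^ L) by (pose proof (pow2_ge_INR (S k)); lra).
    pose proof ln2_lt_1. pose proof ln_lt_2.
    assert (2 ^ L * t <= / 4).
    { replace (/ 4) with (2 ^ L * / (4 * 2 ^ L)) by (field; lra). apply Rmult_le_compat_l; lra. }
    assert (2 ^ L * (- q) <= / 4).
    { replace (/ 4) with (2 ^ L * / (4 * 2 ^ L)) by (field; lra). apply Rmult_le_compat_l; lra. }
    assert (INR (S k) * t * ln 2 <= 2 ^ L * t).
    { pose proof (pos_INR (S k)). assert (0 <= INR (S k) * t) by nra. nra. }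
    assert (2 ^ S k * (- q) <= 2 ^ L * (- q)) by (apply Rmult_le_compat_r; lra).
    assert (- / 2 <= e) by (unfold e; lra).
    pose proof (exp_ineq1_le e). lra. }
  assert (HKpos : (0 < K)%nat) by (unfold K; lia).
  assert (HN : 2 ^ S K * (S0 - INR K) <= N0).
  { unfold N0, S0. rewrite (Series_incr_n _ K HKpos EN), (Series_incr_n _ K HKpos ES).
    assert (H1 : 0 <= sum_f_R0 (Pnum_term t q) (Init.Nat.pred K)).
    { pose proof (sum_ge (Pnum_term t q) 0 (Init.Nat.pred K)) as Hs. rewrite Rmult_0_r in Hs. apply Hs.
      intros k _. rewrite Pnum_Pterm. pose proof (Pterm_pos t q k). assert (0 < 2 ^ S k) by (apply pow_lt; lra). nra. }
    assert (H2 : sum_f_R0 (Pterm t q) (Init.Nat.pred K) <= INR K).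
    { pose proof (sum_le (Pterm t q) 1 (Init.Nat.pred K)) as Hs. rewrite Rmult_1_r in Hs.
      replace (S (Init.Nat.pred K)) with K in Hs by (unfold K; simpl; reflexivity). apply Hs.
      intros k _. apply Pterm_le1; auto. }
    assert (H3 : 2 ^ S K * Series (fun k => Pterm t q (K + k)%nat) <= Series (fun k => Pnum_term t q (K + k)%nat)).
    { rewrite <- Series_scal_l. apply Series_le.
      - intros k. split.
        + pose proof (Pterm_pos t q (K + k)). assert (0 < 2 ^ S K) by (apply pow_lt; lra). nra.
        + rewrite Pnum_Pterm. apply Rmult_le_compat_r; [apply Rlt_le, Pterm_pos|].
          apply Rle_pow; [lra | lia].
      - apply (ex_series_incr_n (Pnum_term t q) K). auto. }
    assert (0 < 2 ^ S K) by (apply pow_lt; lra).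
    nra. }
  assert (HLK : INR L * / 2 = 2 * INR K) by (unfold L; rewrite mult_INR; simpl INR; field).
  assert (HK2 : INR K <= 2 ^ K) by apply pow2_ge_INR.
  assert (HKM : M < INR K) by (unfold K; rewrite S_INR; lra).
  assert (HSK : 2 ^ S K = 2 * 2 ^ K) by reflexivity.
  apply Rlt_le_trans with (2 ^ K); [lra|].
  apply (Rmult_le_reg_r S0); auto. unfold Rdiv. rewrite Rmult_assoc, Rinv_l, Rmult_1_r by lra.
  assert (0 < 2 ^ K) by (apply pow_lt; lra).
  nra.
Qed.

Theorem proposition5p2 :
  (forall t q : R, 0 <= t -> q < 0 ->
     is_derive (fun x => P t x) q
       (Series (Pnum_term t q) / Series (Pterm t q))) /\
  (forall t : R, 0 < t <= 1 ->
     filterlim (fun q => dPdq t q) (at_left 0) (Rbar_locally p_infty)) /\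
  (forall M : R, exists delta : posreal,
     forall t q : R, 0 <= t -> q < 0 -> Rabs t < delta -> Rabs q < delta ->
       M < dPdq t q) /\
  (forall t q : R, 0 <= t -> q < 0 -> 2 < dPdq t q) /\
  (forall t : R, 0 <= t ->
     filterlim (fun q => dPdq t q) (Rbar_locally m_infty) (locally 2)).
Proof.
  split; [exact deriv_P|].
  split.
  { intros t Ht Pp [M HM]. destruct (lim1 t Ht M) as [d [Hd H]].
    exists (mkposreal d Hd). intros y Hy Hy0.
    change (Rabs (y + - 0) < d) in Hy. rewrite Ropp_0, Rplus_0_r in Hy.
    apply Rabs_def2 in Hy.
    apply HM. rewrite dPdq_eq by lra. apply H. lra. }
  split.
  { intros M. destruct (lim2 M) as [d H]. exists d. intros t q Ht Hq Hta Hqa.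
    rewrite dPdq_eq by lra. apply H; auto. }
  split.
  { intros t q Ht Hq. rewrite dPdq_eq by lra. apply ratio_gt2; auto. }
  intros t Ht Pp [eps HP].
  set (C := Series g2).
  assert (HC : 0 <= C).
  { apply Series_nonneg; [|apply ex_g2]. intros k. unfold g2.
    pose proof (exp_pos (2 ^ S k * (-1/2))). assert (0 < 2 ^ S k) by (apply pow_lt; lra). nra. }
  pose proof (cond_pos eps) as He.
  assert (Hq : 0 < eps / (C + 1)) by (apply Rdiv_lt_0_compat; lra).
  exists (Rmin (-1) (ln (eps / (C + 1)) - 1)).
  intros x Hx. apply HP.
  change (Rabs (dPdq t x + - 2) < eps).
  assert (Hx1 : x < -1) by (pose proof (Rmin_l (-1) (ln (eps / (C + 1)) - 1)); lra).
  assert (Hx2 : x + 1 < ln (eps / (C + 1))) by (pose proof (Rmin_r (-1) (ln (eps / (C + 1)) - 1)); lra).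
  rewrite dPdq_eq by lra.
  pose proof (ratio_gt2 t x Ht ltac:(lra)) as G.
  pose proof (ratio_upper t x Ht ltac:(lra)) as U.
  assert (E : exp (x + 1) < eps / (C + 1)).
  { rewrite <- (exp_ln (eps / (C + 1))) by auto. apply exp_increasing; auto. }
  assert (E2 : exp (x + 1) * C <= eps / (C + 1) * C) by (apply Rmult_le_compat_r; lra).
  assert (E3 : eps / (C + 1) * C < eps).
  { apply (Rmult_lt_reg_r (C + 1)); [lra|].
    replace (eps / (C + 1) * C * (C + 1)) with (eps * C) by (field; lra). nra. }
  fold C in U.
  rewrite Rabs_pos_eq by lra. lra.
Qed.
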